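(* Let $G$ be a bipartite graph with parts $B_1,B_2$, and let $a,c\in B_1$ and $b,d\in B_2$. There is perfect pair state transfer between $e_a-e_b$ and $e_c-e_d$ (with respect to the Laplacian of $G$) if and only if there is perfect plus state transfer between $e_a+e_b$ and $e_c+e_d$ (with respect to the unsigned Laplacian of $G$).
   Context: Let $A$ be the adjacency matrix and $\Delta$ the degree matrix of $G$. The Laplacian is $L=\Delta-A$ and the unsigned Laplacian is $L_+=\Delta+A$. Perfect pair state transfer between $e_a-e_b$ and $e_c-e_d$ means $\exp(itL)(e_a-e_b)=\gamma(e_c-e_d)$ for some $t\ge0$ and $\gamma\in\mathbb{C}$, $|\gamma|=1$. Perfect plus state transfer between $e_a+e_b$ and $e_c+e_d$ means $\exp(itL_+)(e_a+e_b)=\gamma(e_c+e_d)$ for some $t\ge0$ and $|\gamma|=1$. Here $e_v$ is the standard basis vector of vertex $v$. *)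

(* Defs.v *)
From HB Require Import structures.
From mathcomp Require Import all_boot all_order all_algebra.
From mathcomp Require Import all_classical all_reals all_analysis.
From mathcomp.real_closed Require Import complex.
Set Implicit Arguments. Unset Strict Implicit. Unset Printing Implicit Defensive.
Import Order.TTheory GRing.Theory Num.Theory numFieldNormedType.Exports.
Local Open Scope ring_scope.
Local Open Scope complex_scope.

Definition simple_graph n (e : rel 'I_n) : Prop :=
  (forall u v, e u v = e v u) /\ (forall u, ~~ e u u).

Definition bipartition n (e : rel 'I_n) (B1 B2 : {set 'I_n}) : Prop :=
  B1 :&: B2 = finset.set0 /\ B1 :|: B2 = [set: 'I_n] /\
  (forall u v, e u v -> (u \in B1 /\ v \in B2) \/ (u \in B2 /\ v \in B1)).

Section Mats.
Variable R : realType.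
Variable n : nat.
Variable e : rel 'I_n.

Definition adjmx : 'M[R]_n := \matrix_(i, j) (e i j)%:R.
Definition degmx : 'M[R]_n := diag_mx (\row_i (\sum_j (e i j)%:R)).
Definition laplacian : 'M[R]_n := degmx - adjmx.
Definition signless_laplacian : 'M[R]_n := degmx + adjmx.
End Mats.

(* Complex matrix exponential exp(A) = sum_k A^k / k!, the limit of the
   partial sums taken entrywise (real and imaginary parts separately,
   which is exactly convergence in C). *)
Definition cexpm (R : realType) n (A : 'M[R[i]]_n) : 'M[R[i]]_n :=
  \matrix_(i, j)
    ((limn (series (fun k => complex.Re ((A ^+ k) i j) / (k`!)%:R)))
     +i* (limn (series (fun k => complex.Im ((A ^+ k) i j) / (k`!)%:R)))).

Definition evec (R : realType) n (v : 'I_n) : 'cV[R[i]]_n := delta_mx v 0.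

Definition cmx (R : realType) n (M : 'M[R]_n) : 'M[R[i]]_n :=
  map_mx (fun x => x%:C) M.

Definition state_transfer (R : realType) n (M : 'M[R]_n) (x y : 'cV[R[i]]_n)
  : Prop :=
  exists t : R, 0 <= t /\ exists gamma : R[i], `|gamma| = 1 /\
    cexpm (((t%:C) * 'i) *: cmx M) *m x = gamma *: y.

Definition pair_PST (R : realType) n (e : rel 'I_n) (a b c d : 'I_n) : Prop :=
  state_transfer (laplacian R e) (evec R a - evec R b) (evec R c - evec R d).

Definition plus_PST (R : realType) n (e : rel 'I_n) (a b c d : 'I_n) : Prop :=
  state_transfer (signless_laplacian R e)
    (evec R a + evec R b) (evec R c + evec R d).

(* Main.v *)
Require Import Defs.
From HB Require Import structures.
From mathcomp Require Import all_boot all_order all_algebra.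
From mathcomp Require Import all_classical all_reals all_analysis.
From mathcomp.real_closed Require Import complex.
Import Order.TTheory GRing.Theory Num.Theory.
Import numFieldNormedType.Exports.
Local Open Scope ring_scope.

Lemma limnN_aux (R : realType) (u : R^nat) : limn (- u) = - limn u.
Proof.
case: (pselect (cvgn u)) => [cu|ncu].
  exact: limN.
have ncu' : ~ cvgn (- u).
  by move=> h; apply: ncu; have := is_cvgN h; rewrite opprK; apply; apply: nat_filter.
rewrite (dvgP ncu) (dvgP ncu').
by rewrite /point /= oppr0.
Qed.

Lemma limS_aux (R : realType) (r : R) (u : R^nat) : r = 1 \/ r = -1 ->
  limn (series (fun k => r * u k)) = r * limn (series u).
Proof.
case=> ->.
  by rewrite mul1r; congr (limn (series _)); apply/funext => k; rewrite mul1r.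
have -> : (fun k => -1 * u k) = - u by apply/funext => k; rewrite mulN1r.
by rewrite seriesN limnN_aux mulN1r.
Qed.

Lemma cexpmE {R : realType} {n} (Y : 'M[R[i]]_n) i j : cexpm Y i j =
  ((limn (series (fun k => complex.Re ((Y ^+ k) i j) / (k`!)%:R)))
     +i* (limn (series (fun k => complex.Im ((Y ^+ k) i j) / (k`!)%:R))))%C.
Proof. exact: mxE. Qed.

Section Main.
Local Open Scope complex_scope.
Variable R : realType.
Variable n : nat.
Variable sg : 'I_n -> R.
Hypothesis sgE : forall i, sg i = 1 \/ sg i = -1.

Definition Sc : 'M[R[i]]_n := diag_mx (\row_i (sg i)%:C).

Lemma sg2 i : sg i * sg i = 1.
Proof. by case: (sgE i) => ->; rewrite ?mulr1 ?mulrNN ?mulr1. Qed.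

Lemma sgsg i j : sg i * sg j = 1 \/ sg i * sg j = -1.
Proof.
by case: (sgE i) => ->; case: (sgE j) => ->;
  rewrite ?mulr1 ?mul1r ?mulrNN ?mulr1 ?mulN1r; auto.
Qed.

Lemma ScE (Y : 'M[R[i]]_n) i j : (Sc *m Y *m Sc) i j = (sg i * sg j)%:C * Y i j.
Proof.
rewrite /Sc mul_mx_diag mul_diag_mx !mxE.
by rewrite rmorphM /= mulrAC.
Qed.

Lemma ScSc : Sc *m Sc = 1%:M.
Proof.
apply/matrixP => i j.
have := ScE 1%:M i j; rewrite mulmx1 => ->.
rewrite !mxE; case: eqP => [->|]; last by rewrite !mulr0.
by rewrite sg2 mulr1.
Qed.

Lemma ScX (Y : 'M[R[i]]_n) k : (Sc *m Y *m Sc) ^+ k = Sc *m Y ^+ k *m Sc.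
Proof.
elim: k => [|k IH].
  by rewrite !expr0 -idmxE mulmx1 ScSc.
rewrite !exprS IH -!mulmxE !mulmxA -(mulmxA (Sc *m Y) Sc Sc) ScSc mulmx1.
done.
Qed.

Lemma lim_entry (r : R) (f g : nat -> R[i]) : r = 1 \/ r = -1 ->
  (forall k, f k = r%:C * g k) ->
  (limn (series (fun k => complex.Re (f k) / (k`!)%:R))
     +i* limn (series (fun k => complex.Im (f k) / (k`!)%:R))) =
  r%:C * (limn (series (fun k => complex.Re (g k) / (k`!)%:R))
     +i* limn (series (fun k => complex.Im (g k) / (k`!)%:R))).
Proof.
move=> hr hfg.
have -> : (fun k => complex.Re (f k) / (k`!)%:R) =
   (fun k => r * (complex.Re (g k) / (k`!)%:R)).
  apply/funext => k; rewrite hfg; case: (g k) => x y /=.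
  by rewrite mul0r subr0 mulrA.
have -> : (fun k => complex.Im (f k) / (k`!)%:R) =
   (fun k => r * (complex.Im (g k) / (k`!)%:R)).
  apply/funext => k; rewrite hfg; case: (g k) => x y /=.
  by rewrite mul0r addr0 mulrA.
rewrite !limS_aux //.
by apply/eqP; rewrite eq_complex /= !mul0r subr0 addr0 !eqxx.
Qed.

Lemma cexpm_S (Y : 'M[R[i]]_n) : cexpm (Sc *m Y *m Sc) = Sc *m cexpm Y *m Sc.
Proof.
apply/matrixP => i j.
apply: etrans; first exact: (cexpmE (Sc *m Y *m Sc)).
apply: esym; apply: etrans; first exact: ScE.
apply: esym; apply: etrans; last (apply: f_equal; apply: esym; exact: (cexpmE Y)).
apply: lim_entry; first exact: sgsg.
by move=> k; rewrite ScX ScE.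
Qed.

Lemma Sc_evec v : Sc *m evec R v = (sg v)%:C *: evec R v.
Proof.
apply/matrixP => i j; rewrite /Sc mul_diag_mx !mxE.
by case: eqP => [->|_]; rewrite ?mulr0 ?mulr1 ?mulr0n ?mulr1n.
Qed.

Lemma Sc_cmx (M : 'M[R]_n) i j :
  (Sc *m cmx M *m Sc) i j = (sg i * sg j * M i j)%:C.
Proof. by rewrite ScE /cmx mxE [RHS]rmorphM. Qed.

Variable e : rel 'I_n.
Hypothesis Hbip : forall u v, e u v -> sg u * sg v = -1.
Hypothesis Hirr : forall u, ~~ e u u.

Lemma lap_S : cmx (signless_laplacian R e) = Sc *m cmx (laplacian R e) *m Sc.
Proof.
apply/matrixP => i j; rewrite Sc_cmx /cmx mxE; congr (_%:C).
rewrite /laplacian /signless_laplacian /degmx /adjmx !mxE.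
case: (eqVneq i j) => [<-|nij].
  by rewrite (negbTE (Hirr i)) sg2 mul1r /= addr0 subr0.
rewrite /= !mulr0n !add0r mulrN.
case E: (e i j); last by rewrite mulr0 oppr0.
by rewrite (Hbip _ _ E) mulN1r opprK.
Qed.

Lemma lap_S' : cmx (laplacian R e) = Sc *m cmx (signless_laplacian R e) *m Sc.
Proof.
apply/matrixP => i j; rewrite Sc_cmx /cmx mxE; congr (_%:C).
rewrite /laplacian /signless_laplacian /degmx /adjmx !mxE.
case: (eqVneq i j) => [<-|nij].
  by rewrite (negbTE (Hirr i)) sg2 mul1r /= addr0 subr0.
rewrite /= !mulr0n !add0r.
case E: (e i j); last by rewrite mulr0 oppr0.
by rewrite (Hbip _ _ E) mulN1r.
Qed.

Lemma transfer_S (M1 M2 : 'M[R]_n) (x1 x2 y1 y2 : 'cV[R[i]]_n) :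
  cmx M2 = Sc *m cmx M1 *m Sc -> Sc *m x2 = x1 -> Sc *m y1 = y2 ->
  state_transfer M1 x1 y1 -> state_transfer M2 x2 y2.
Proof.
move=> HM hx hy [t [t0 [g [ng H]]]]; exists t; split => //; exists g; split => //.
have -> : ((t%:C * 'i) *: cmx M2) = Sc *m ((t%:C * 'i) *: cmx M1) *m Sc.
  by rewrite HM scalemxAl scalemxAr.
rewrite cexpm_S -mulmxA hx -mulmxA H.
by rewrite -scalemxAr hy.
Qed.

End Main.

Theorem mainTheorem7 (R : realType) (n : nat) (e : rel 'I_n)
  (B1 B2 : {set 'I_n}) (a b c d : 'I_n) :
  simple_graph e -> bipartition e B1 B2 ->
  a \in B1 -> c \in B1 -> b \in B2 -> d \in B2 ->
  (pair_PST R e a b c d <-> plus_PST R e a b c d).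
Proof.
move=> [_ Hirr] [HI [_ He]] aB cB bB dB.
have nB2 : forall x, x \in B2 -> x \notin B1.
  move=> x xB2; apply/negP => xB1.
  have : x \in B1 :&: B2 by rewrite inE xB1 xB2.
  by rewrite HI finset.in_set0.
pose sg := fun v : 'I_n => if v \in B1 then 1 else -1 : R.
have sgE : forall i, sg i = 1 \/ sg i = -1.
  by move=> i; rewrite /sg; case: (i \in B1); auto.
have Hbip : forall u v, e u v -> sg u * sg v = -1.
  move=> u v /He [[uB vB]|[uB vB]]; rewrite /sg.
    by rewrite uB (negbTE (nB2 _ vB)) mul1r.
  by rewrite vB (negbTE (nB2 _ uB)) mulr1.
have sa : sg a = 1 by rewrite /sg aB.
have sc : sg c = 1 by rewrite /sg cB.
have sb : sg b = -1 by rewrite /sg (negbTE (nB2 _ bB)).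
have sd : sg d = -1 by rewrite /sg (negbTE (nB2 _ dB)).
have vp : forall u v, sg u = 1 -> sg v = -1 ->
    Sc R n sg *m (evec R u + evec R v) = evec R u - evec R v.
  move=> u v su sv; rewrite mulmxDr !(Sc_evec R n sg) su sv.
  by rewrite scale1r rmorphN1 scaleN1r.
have vm : forall u v, sg u = 1 -> sg v = -1 ->
    Sc R n sg *m (evec R u - evec R v) = evec R u + evec R v.
  move=> u v su sv; rewrite mulmxBr !(Sc_evec R n sg) su sv.
  by rewrite scale1r rmorphN1 scaleN1r opprK.
rewrite /pair_PST /plus_PST; split.
  apply: (@transfer_S R n sg sgE).
  - exact: (@lap_S R n sg sgE e Hbip Hirr).
  - exact: (vp _ _ sa sb).
  - exact: (vm _ _ sc sd).
apply: (@transfer_S R n sg sgE).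
- exact: (@lap_S' R n sg sgE e Hbip Hirr).
- exact: (vm _ _ sa sb).
- exact: (vp _ _ sc sd).
Qed.
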